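(* Let $\nu\ge0$, $\epsilon\in\{0,1\}$, $\zeta$ real with $1+\zeta\nu^2\neq0$. For every smooth solution $U(X,T)$ of $$-2\nu^2U_XU_{XX}+3\epsilon U_XU-\nu^2U_{XXX}U+\tfrac23U_{XXX}-\tfrac23\nu^{5/2}U_{XXX}+\epsilon U_T-\nu^2U_{XXT}=0,$$ the Pfaffian system for $\gamma(X,T)$ $$-\gamma_X=\frac{3}{4(1+\zeta\nu^2)}\gamma^2-\Big(\nu^2U_{XX}-\epsilon U+\tfrac13\epsilon(\zeta+\sqrt\nu)\Big),$$ $$-\gamma_T=\frac{1}{2(1+\zeta\nu^2)}\Big(-\tfrac32U-\zeta-\sqrt\nu\Big)\gamma^2+U_X\gamma+U(\nu^2U_{XX}-\epsilon U)+\tfrac23(\nu^{5/2}-1)U_{XX}-\tfrac13\epsilon(\zeta+\sqrt\nu)U+\tfrac29\epsilon(\zeta^2+2\sqrt\nu\zeta+\nu)$$ is completely integrable; i.e. $\gamma$ is a quadratic pseudo-potential of this equation.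
   Context: A real function $\Gamma$ is a pseudo-potential of an equation if there are smooth functions $f,g$ of $\Gamma$, the independent variables, $U$ and finitely many derivatives of $U$ such that $\Omega_\Gamma=d\Gamma-(f\,dX+g\,dT)$ satisfies $d\Omega_\Gamma\equiv0\bmod\Omega_\Gamma$ on every solution; it is quadratic if $f,g$ are polynomials of degree at most two in $\Gamma$. *)

(* Defs.v *)
From Stdlib Require Import Reals List.
From Coquelicot Require Import Coquelicot.
Open Scope R_scope.

Definition dX (F : R -> R -> R) : R -> R -> R :=
  fun x t => Derive (fun y => F y t) x.
Definition dT (F : R -> R -> R) : R -> R -> R :=
  fun x t => Derive (fun s => F x s) t.

(* Iterated partial derivatives: true = d/dX, false = d/dT (applied right to left). *)
Fixpoint iterD (w : list bool) (F : R -> R -> R) : R -> R -> R :=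
  match w with
  | nil => F
  | b :: w' => (if b then dX else dT) (iterD w' F)
  end.

Definition smooth2 (F : R -> R -> R) : Prop :=
  forall (w : list bool) (x t : R),
    ex_derive (fun y => iterD w F y t) x /\
    ex_derive (fun s => iterD w F x s) t /\
    continuous (fun p : R * R => iterD w F (fst p) (snd p)) (x, t).

Definition is_solution (nu eps : R) (U : R -> R -> R) : Prop :=
  forall x t : R,
    let Ux := dX U x t in
    let Uxx := dX (dX U) x t in
    let Uxxx := dX (dX (dX U)) x t in
    let Ut := dT U x t in
    let Uxxt := dT (dX (dX U)) x t in
    - 2 * nu ^ 2 * Ux * Uxx + 3 * eps * Ux * U x t - nu ^ 2 * Uxxx * U x t
    + 2 / 3 * Uxxx - 2 / 3 * (nu ^ 2 * sqrt nu) * Uxxx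
    + eps * Ut - nu ^ 2 * Uxxt = 0.

(* Right-hand sides f, g of gamma_X = f, gamma_T = g, as functions of
   (gamma, X, T) along the solution U. *)
Definition pf_f (nu eps zeta : R) (U : R -> R -> R) (c x t : R) : R :=
  - (3 / (4 * (1 + zeta * nu ^ 2)) * c ^ 2
     - (nu ^ 2 * dX (dX U) x t - eps * U x t + 1 / 3 * eps * (zeta + sqrt nu))).

Definition pf_g (nu eps zeta : R) (U : R -> R -> R) (c x t : R) : R :=
  - (1 / (2 * (1 + zeta * nu ^ 2)) * (- 3 / 2 * U x t - zeta - sqrt nu) * c ^ 2
     + dX U x t * c
     + U x t * (nu ^ 2 * dX (dX U) x t - eps * U x t)
     + 2 / 3 * (nu ^ 2 * sqrt nu - 1) * dX (dX U) x t
     - 1 / 3 * eps * (zeta + sqrt nu) * U x t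
     + 2 / 9 * eps * (zeta ^ 2 + 2 * sqrt nu * zeta + nu)).

(* Omega = dgamma - (f dX + g dT); dOmega = (f_T + f_gamma g - g_X - g_gamma f) dX/\dT
   mod Omega, so dOmega == 0 mod Omega iff this coefficient vanishes identically. *)
Definition pfaff_integrable (f g : R -> R -> R -> R) : Prop :=
  forall c x t : R,
    Derive (fun s => f c x s) t + Derive (fun c' => f c' x t) c * g c x t
    = Derive (fun y => g c y t) x + Derive (fun c' => g c' x t) c * f c x t.

(* Main.v *)
Require Import Defs.
From Stdlib Require Import Reals Lra.
From Coquelicot Require Import Coquelicot.
Open Scope R_scope.

Theorem corollary3 (nu eps zeta : R) (U : R -> R -> R) :
  0 <= nu ->
  (eps = 0 \/ eps = 1) ->
  1 + zeta * nu ^ 2 <> 0 ->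
  smooth2 U ->
  is_solution nu eps U ->
  pfaff_integrable (pf_f nu eps zeta U) (pf_g nu eps zeta U).
Proof.
  intros Hnu Heps Ha Hs Hsol c x t.
  assert (DX0 := proj1 (Hs nil x t)).
  assert (DX1 := proj1 (Hs (cons true nil) x t)).
  assert (DX2 := proj1 (Hs (cons true (cons true nil)) x t)).
  assert (DT0 := proj1 (proj2 (Hs nil x t))).
  assert (DT2 := proj1 (proj2 (Hs (cons true (cons true nil)) x t))).
  simpl in *.
  assert (E1: Derive (fun s => pf_f nu eps zeta U c x s) t
     = nu^2 * dT (dX (dX U)) x t - eps * dT U x t).
  { apply is_derive_unique. unfold pf_f. auto_derive; auto. unfold dT. ring. }
  assert (E2: Derive (fun c' => pf_f nu eps zeta U c' x t) c
     = - (3 / (4 * (1 + zeta * nu ^ 2)) * (2 * c))).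
  { apply is_derive_unique. unfold pf_f. auto_derive; auto. field. auto. }
  assert (E3: Derive (fun c' => pf_g nu eps zeta U c' x t) c
     = - (1 / (2 * (1 + zeta * nu ^ 2)) * (- 3 / 2 * U x t - zeta - sqrt nu) * (2*c)
     + dX U x t)).
  { apply is_derive_unique. unfold pf_g. auto_derive; auto. field. auto. }
  assert (E4: Derive (fun y => pf_g nu eps zeta U c y t) x
     = - (1 / (2 * (1 + zeta * nu ^ 2)) * (- 3 / 2 * dX U x t) * c ^ 2
     + dX (dX U) x t * c
     + dX U x t * (nu ^ 2 * dX (dX U) x t - eps * U x t)
     + U x t * (nu ^ 2 * dX (dX (dX U)) x t - eps * dX U x t)
     + 2 / 3 * (nu ^ 2 * sqrt nu - 1) * dX (dX (dX U)) x t
     - 1 / 3 * eps * (zeta + sqrt nu) * dX U x t)).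
  { apply is_derive_unique. unfold pf_g. auto_derive; [unfold dX in *; tauto|]. unfold dX. field. auto. }
  rewrite E1, E2, E3, E4. unfold pf_f, pf_g.
  assert (HE := Hsol x t). simpl in HE. unfold dT in *.
  assert (Hss : sqrt nu * sqrt nu = nu) by (apply sqrt_sqrt; auto).
  revert HE Hss Ha.
  generalize (dX U x t) (dX (dX U) x t) (dX (dX (dX U)) x t)
    (Derive (fun s => U x s) t) (Derive (fun s => dX (dX U) x s) t) (U x t) (sqrt nu).
  intros Ux Uxx Uxxx Ut Uxxt u s HE Hss Ha. subst nu.
  apply Rminus_diag_uniq.
  transitivity (- (- 2 * (s*s) ^ 2 * Ux * Uxx + 3 * eps * Ux * u - (s*s) ^ 2 * Uxxx * u
    + 2 / 3 * Uxxx - 2 / 3 * ((s*s) ^ 2 * s) * Uxxx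
    + eps * Ut - (s*s) ^ 2 * Uxxt)).
  - destruct Heps; subst eps; field; auto.
  - simpl in *. lra.
Qed.
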